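(* Suppose that $2$ is invertible in $T$. Then for every sequence ${\mathbf s}$ in $\widehat{\mathcal S}$, $${\mathcal Y}_T({\mathbf s})=\Big\{(z_\sigma)\in\bigoplus_{\sigma\in I({\mathbf s})}Q_T\ \Big|\ \textstyle\sum_\sigma z_\sigma m_\sigma\in S_T\text{ for all }(m_\sigma)\in{\mathcal X}_T({\mathbf s})\Big\}.$$ Consequently ${\mathcal Y}_T({\mathbf s})$ is identified with the graded dual $\bigoplus_n\operatorname{Hom}_{S_T}({\mathcal X}_T({\mathbf s}),S_T\{n\})$ via the pairing $((x_\sigma),(y_\sigma))\mapsto\sum_\sigma x_\sigma y_\sigma$.
   Context: $R$ irreducible reduced finite root system (positive roots $R^+$, simple roots $\Pi$, highest root $\gamma$); $\widehat X=X\oplus\mathbb Z$, $\delta=(0,-1)$, affine roots $\widehat R=\{\alpha+n\delta\}$. $\widehat{\mathcal W}$ generated by $s_{\alpha,n}(v,m)=(v-(\langle\alpha,v\rangle-mn)\alpha^\vee,m)$, acting contragrediently on $\widehat X$; $\widehat{\mathcal S}=\{s_{\alpha,0}:\alpha\in\Pi\}\cup\{s_{\gamma,1}\}$ with simple affine roots $\alpha$ resp. $-\gamma+\delta$. $T$: commutative unital domain, affine roots nonzero in $\widehat X\otimes T$; $S_T$ symmetric algebra of $\widehat X\otimes T$ graded in even degrees, $M\{n\}_k=M_{n+k}$; $Q_T=S_T[2^{-1}][\alpha^{-1}:\alpha\in\widehat R]$. For ${\mathbf s}=(s_1,\dots,s_l)$: $I({\mathbf s})$ = strictly increasing tuples in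 $\{1,\dots,l\}$, $\operatorname{ev}(i_1,\dots,i_n)=s_{i_1}\cdots s_{i_n}$; ${\mathbf s}'=(s_1,\dots,s_{l-1})$, $I({\mathbf s})=I({\mathbf s}')\sqcup I({\mathbf s}')s_l$; $\Delta(z)_\gamma=\Delta(z)_{\gamma s_l}=z_\gamma$; $c^\lambda$ multiplies the $\sigma$-component by $\operatorname{ev}(\sigma)(\lambda)\otimes1$; $\alpha_l$ the simple affine root of $s_l$. ${\mathcal X}_T(\emptyset)=S_T$, ${\mathcal X}_T({\mathbf s})=\Delta({\mathcal X}_T({\mathbf s}'))+c^{\alpha_l}\Delta({\mathcal X}_T({\mathbf s}'))\subset\bigoplus_{I({\mathbf s})}S_T$; ${\mathcal Y}_T(\emptyset)=S_T\subset Q_T$, ${\mathcal Y}_T({\mathbf s})=\Delta({\mathcal Y}_T({\mathbf s}'))+(c^{\alpha_l})^{-1}\Delta({\mathcal Y}_T({\mathbf s}'))\subset\bigoplus_{I({\mathbf s})}Q_T$. *)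

(* Defs.v *)
From HB Require Import structures.
From mathcomp Require Import all_boot all_order all_algebra.
From mathcomp Require Import fraction mpoly.

Set Implicit Arguments.
Unset Strict Implicit.
Unset Printing Implicit Defensive.

Import GRing.Theory.
Local Open Scope ring_scope.

(* Finite root data.  The lattice X is Z^r (a chosen basis, X = 'rV[int]_r)
   and its dual X^\vee is identified with Z^r via the standard pairing.   *)
Section RootData.
Variable r : nat.
Local Notation X := 'rV[int]_r.

Definition pairing (mu v : X) : int := \sum_(i < r) mu 0 i * v 0 i.

Definition is_root_datum (R : seq X) (cor : X -> X) : Prop :=
  [/\ uniq R, {in R &, injective cor},
      {in R, forall a, pairing a (cor a) = 2},
      {in R &, forall a b, b - pairing b (cor a) *: a \in R} &
      {in R &, forall a b, cor b - pairing a (cor b) *: cor a \in map cor R}].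

Definition is_reduced (R : seq X) : Prop :=
  {in R &, forall a b, forall m n : int,
      m != 0 -> m *: a = n *: b -> b = a \/ b = - a}.

Definition is_irreducible (R : seq X) (cor : X -> X) : Prop :=
  R != [::] /\
  forall P : pred X, has P R -> has (predC P) R ->
    exists a b, [/\ a \in R, b \in R, P a, ~~ P b &
                   (pairing a (cor b) != 0) || (pairing b (cor a) != 0)].

Definition lincomb (Pi : seq X) (c : 'I_(size Pi) -> int) : X :=
  \sum_(i < size Pi) c i *: Pi`_i.
Arguments lincomb : clear implicits.

Definition is_base (R Pi : seq X) : Prop :=
  [/\ uniq Pi, {subset Pi <= R},
      (forall c, lincomb Pi c = 0 -> forall i, c i = 0) &
      {in R, forall b, exists c, b = lincomb Pi c /\
              ((forall i, 0 <= c i) \/ (forall i, c i <= 0))}].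

Definition is_pos_root (R Pi : seq X) (b : X) : Prop :=
  b \in R /\ exists c, b = lincomb Pi c /\ forall i, 0 <= c i.

Definition is_highest_root (R Pi : seq X) (g : X) : Prop :=
  is_pos_root R Pi g /\
  forall b, is_pos_root R Pi b ->
    exists c, g - b = lincomb Pi c /\ forall i, 0 <= c i.

(* Affine part.  Xh = X (+) Z ; delta = (0,-1), so alpha + n delta = (alpha,-n). *)
Definition Xh := (X * int)%type.

(* contragredient action on Xh of s_{alpha,n}
   ( s_{alpha,n}(v,m) = (v - (<alpha,v> - m n) alpha^vee, m) on X^vee (+) Z ),
   for the pairing <(mu,k),(v,m)> = <mu,v> - k m :
     s_{alpha,n}(mu,k) = (mu - <mu,alpha^vee> alpha, k - n <mu,alpha^vee>). *)
Definition sref (al alv : X) (n : int) (x : Xh) : Xh :=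
  (x.1 - pairing x.1 alv *: al, x.2 - n * pairing x.1 alv).

(* The simple affine reflections \hat S are labelled by option 'I_(size Pi):
   Some i  <-> s_{Pi_i, 0}   (simple affine root Pi_i = (Pi_i, 0)),
   None    <-> s_{gamma, 1}  (simple affine root -gamma + delta = (-gamma,-1)). *)
Definition lab_act (cor : X -> X) (Pi : seq X) (g : X)
    (t : option 'I_(size Pi)) : Xh -> Xh :=
  match t with
  | Some i => sref Pi`_i (cor Pi`_i) 0
  | None => sref g (cor g) 1
  end.

Definition lab_root (Pi : seq X) (g : X) (t : option 'I_(size Pi)) : Xh :=
  match t with
  | Some i => (Pi`_i, 0)
  | None => (- g, -1)
  end.

(* S_T = Sym(Xh (x) T) = T[x_0,...,x_r]  (x_i, i<r, from the basis of X,
   x_r from the Z summand); Q_T is realised inside the fraction field of S_T. *)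
Variable T : idomainType.
Local Notation ST := {mpoly T[r.+1]}.
Local Notation FT := {fraction ST}.

(* lambda (x) 1 in S_T (of degree 2 for the even grading) *)
Definition embX (x : Xh) : ST :=
  \sum_(i < r) 'X_(widen_ord (leqnSn r) i) *~ x.1 0 i + 'X_(ord_max) *~ x.2.

Definition inS (q : FT) : Prop := exists p : ST, q = tofrac p.

(* affine roots: alpha + n delta = (alpha, -n), alpha in R, n in Z *)
Definition is_aff_root (R : seq X) (x : Xh) : bool := x.1 \in R.

(* Q_T = S_T[2^-1][alpha^-1 : alpha affine root]  (as a subring of Frac S_T) *)
Definition inQ (R : seq X) (q : FT) : Prop :=
  exists (k : nat) (L : seq Xh),
    all (is_aff_root R) L /\
    inS (tofrac (2%:R ^+ k * \prod_(x <- L) embX x) * q).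

(* elements of (+)_{sigma in I(s)} FT ; I(s) for s of length l is encoded as
   {set 'I_l} (strictly increasing tuples = subsets of positions) *)
Definition Md (l : nat) := {ffun {set 'I_l} -> FT}.

Definition restr (l : nat) (sg : {set 'I_l.+1}) : {set 'I_l} :=
  [set i : 'I_l | widen_ord (leqnSn l) i \in sg].

Section Seq.
Variable L : Type.
Variable act : L -> Xh -> Xh.
Variable root : L -> Xh.
Variable s : nat -> L.          (* s_1, s_2, ... (0-based: s 0 = s_1) *)

(* ev(sigma) applied to lambda; ev(gamma s_l) = ev(gamma) s_l *)
Fixpoint evw (l : nat) : {set 'I_l} -> Xh -> Xh :=
  match l return {set 'I_l} -> Xh -> Xh with
  | 0 => fun _ x => x
  | l'.+1 => fun sg x =>
      if ord_max \in sg then evw (restr sg) (act (s l') x)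
      else evw (restr sg) x
  end.

Definition Delta (l : nat) (z : Md l) : Md l.+1 := [ffun sg => z (restr sg)].

Definition cmul (l : nat) (lam : Xh) (z : Md l) : Md l :=
  [ffun sg => tofrac (embX (evw sg lam)) * z sg].
Definition cinv (l : nat) (lam : Xh) (z : Md l) : Md l :=
  [ffun sg => (tofrac (embX (evw sg lam)))^-1 * z sg].

Fixpoint Xmod (l : nat) : Md l -> Prop :=
  match l return Md l -> Prop with
  | 0 => fun z => forall sg, inS (z sg)
  | l'.+1 => fun z => exists x x' : Md l',
      [/\ Xmod x, Xmod x' &
          z = Delta x + cmul (root (s l')) (Delta x')]
  end.

Fixpoint Ymod (l : nat) : Md l -> Prop :=
  match l return Md l -> Prop with
  | 0 => fun z => forall sg, inS (z sg)
  | l'.+1 => fun z => exists y y' : Md l',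
      [/\ Ymod y, Ymod y' &
          z = Delta y + cinv (root (s l')) (Delta y')]
  end.
End Seq.

Definition pairF (l : nat) (y m : Md l) : FT := \sum_sg y sg * m sg.

(* grading: S_T lives in even degrees, Xh (x) T in degree 2 *)
Definition homS (k : int) (p : ST) : bool :=
  match k with
  | Posz k' => if odd k' then p == 0 else p \is (k'./2).-homog
  | Negz _ => p == 0
  end.
Definition homF (k : int) (q : FT) : Prop := exists p, q = tofrac p /\ homS k p.

Definition scaleM (l : nat) (p : ST) (m : Md l) : Md l :=
  [ffun sg => tofrac p * m sg].

(* phi is an element of Hom_{S_T}(M, S_T{n}) (graded, degree preserving),
   where M is a graded S_T-submodule of (+)_{I(s)} S_T given by predicate M *)
Definition is_graded_hom (l : nat) (M : Md l -> Prop) (n : int)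
    (phi : Md l -> FT) : Prop :=
  [/\ forall m m', M m -> M m' -> phi (m + m') = phi m + phi m',
      forall p m, M m -> phi (scaleM p m) = tofrac p * phi m,
      forall m, M m -> inS (phi m) &
      forall (k : int) m, M m -> (forall sg, homF k (m sg)) ->
        homF (k + n) (phi m)].

Definition in_graded_dual (l : nat) (M : Md l -> Prop) (phi : Md l -> FT) : Prop :=
  exists (N : nat) (deg : 'I_N -> int) (phis : 'I_N -> Md l -> FT),
    (forall j, is_graded_hom M (deg j) (phis j)) /\
    forall m, M m -> phi m = \sum_j phis j m.

End RootData.

Definition XT (r : nat) (T : idomainType) (cor : 'rV[int]_r -> 'rV[int]_r)
    (Pi : seq 'rV[int]_r) (g : 'rV[int]_r) (s : seq (option 'I_(size Pi))) :
    Md r T (size s) -> Prop :=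
  @Xmod r T _ (@lab_act r cor Pi g) (@lab_root r Pi g) (nth None s) (size s).

Definition YT (r : nat) (T : idomainType) (cor : 'rV[int]_r -> 'rV[int]_r)
    (Pi : seq 'rV[int]_r) (g : 'rV[int]_r) (s : seq (option 'I_(size Pi))) :
    Md r T (size s) -> Prop :=
  @Ymod r T _ (@lab_act r cor Pi g) (@lab_root r Pi g) (nth None s) (size s).

Arguments XT {r} T cor Pi g s _.
Arguments YT {r} T cor Pi g s _.

(* Main.v *)
Require Import Defs.
From HB Require Import structures.
From mathcomp Require Import all_boot all_order all_algebra.
From mathcomp Require Import fraction mpoly.
From mathcomp Require Import ring.
Import GRing.Theory.
Local Open Scope ring_scope.
Set Implicit Arguments.
Unset Strict Implicit.
Unset Printing Implicit Defensive.

Definition ext (l : nat) (b : bool) (t : {set 'I_l}) : {set 'I_l.+1} :=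
  [set i : 'I_l.+1 | if unlift ord_max i is Some j then j \in t else b].

Lemma widen_lift l (i : 'I_l) : widen_ord (leqnSn l) i = lift ord_max i.
Proof. by apply: val_inj; rewrite /= /bump leqNgt ltn_ord. Qed.

Lemma restr_ext l b (t : {set 'I_l}) : restr (ext b t) = t.
Proof.
by apply/setP => i; rewrite !inE widen_lift liftK.
Qed.

Lemma max_ext l b (t : {set 'I_l}) : (ord_max \in ext b t) = b.
Proof. by rewrite inE unlift_none. Qed.

Lemma ext_restr l (sg : {set 'I_l.+1}) : ext (ord_max \in sg) (restr sg) = sg.
Proof.
apply/setP => i; rewrite inE.
case: unliftP => [j ->|->]; last by [].
by rewrite inE widen_lift.
Qed.

Lemma sum_split (V : zmodType) l (F : {set 'I_l.+1} -> V) :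
  \sum_sg F sg = \sum_(t : {set 'I_l}) (F (ext false t) + F (ext true t)).
Proof.
have -> : \sum_(t : {set 'I_l}) (F (ext false t) + F (ext true t))
        = \sum_(t : {set 'I_l}) \sum_(b : bool) F (ext b t).
  by apply: eq_bigr => t _; rewrite big_bool /= addrC.
rewrite pair_big /=.
rewrite (reindex (fun p : {set 'I_l} * bool => ext p.2 p.1)) //.
exists (fun sg => (restr sg, ord_max \in sg)) => [[t b] _|sg _] /=.
  by rewrite restr_ext max_ext.
by rewrite ext_restr.
Qed.

Lemma auxK (F : fieldType) (A X C b : F) : X != 0 -> A * (X * C) * (X^-1 * b) = A * C * b.
Proof. by move=> hX; rewrite -!mulrA; congr (_ * _); rewrite mulrCA mulrA mulrA mulfK. Qed.

Lemma aux_uv (F : fieldType) (a b m x x' : F) : 2%:R != 0 :> F ->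
  (a + b) * x + m * (a - b) * x' =
  2%:R * (2%:R^-1 * (a + b) * x) + 2%:R * (2%:R^-1 * (m * (a - b)) * x').
Proof. by move=> h2; rewrite !mulrA divff // !mul1r. Qed.

Lemma aux_rec0 (F : fieldType) (a b m : F) : m != 0 -> 2%:R != 0 :> F ->
  2%:R^-1 * (a + b) + m^-1 * (2%:R^-1 * (m * (a - b))) = a.
Proof.
move=> hm h2; rewrite mulrCA mulKf // -mulrDr.
by rewrite (_ : a + b + (a - b) = 2%:R * a) ?mulKf //; ring.
Qed.
Lemma aux_rec1 (F : fieldType) (a b m : F) : m != 0 -> 2%:R != 0 :> F ->
  2%:R^-1 * (a + b) + - m^-1 * (2%:R^-1 * (m * (a - b))) = b.
Proof.
move=> hm h2; rewrite mulNr mulrCA mulKf // -mulrN -mulrDr.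
by rewrite (_ : a + b + - (a - b) = 2%:R * b) ?mulKf //; ring.
Qed.

Lemma aux_GPY (F : fieldType) (m u v x x' : F) : m != 0 ->
  ((u + m^-1 * v) + (u + - m^-1 * v)) * x + m * ((u + m^-1 * v) - (u + - m^-1 * v)) * x'
  = 2%:R * (u * x) + 2%:R * (v * x').
Proof. by move=> hm; field. Qed.

Lemma aux_zero (F : fieldType) (a b m : F) : m != 0 -> 2%:R != 0 :> F ->
  2%:R^-1 * (a + b) = 0 -> 2%:R^-1 * (m * (a - b)) = 0 -> a = 0 /\ b = 0.
Proof.
move=> hm h2 /eqP e1 /eqP e2.
move: e1 e2; rewrite !mulf_eq0 !invr_eq0 (negbTE h2) (negbTE hm) /= => /eqP e1 /eqP e2.
have eab : a = b by apply/eqP; rewrite -subr_eq0 e2.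
move: e1; rewrite eab -mulr2n -mulr_natl => /eqP; rewrite mulf_eq0 (negbTE h2) /= => /eqP.
by move=> ->.
Qed.

Lemma aux_x (F : fieldType) (a b m : F) : 2%:R != 0 :> F ->
  a = 2%:R^-1 * ((a + m * b) + (a + - m * b)).
Proof.
by move=> h2; rewrite (_ : a + m * b + (a + - m * b) = 2%:R * a) ?mulKf //; ring.
Qed.

Lemma aux_x' (F : fieldType) (a b m : F) : 2%:R != 0 :> F ->
  m * b = 2%:R^-1 * ((a + m * b) - (a + - m * b)).
Proof.
by move=> h2; rewrite (_ : a + m * b - (a + - m * b) = 2%:R * (m * b)) ?mulKf //; ring.
Qed.

Section Main.
Variables (r : nat) (R : seq 'rV[int]_r) (cor : 'rV[int]_r -> 'rV[int]_r)
  (Pi : seq 'rV[int]_r) (g : 'rV[int]_r) (T : idomainType).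
Hypothesis HRD : is_root_datum R cor.
Hypothesis Hbase : is_base R Pi.
Hypothesis Hg : is_highest_root R Pi g.
Hypothesis Hne : forall x : Xh r, is_aff_root R x -> embX T x != 0.
Hypothesis H2 : (2%:R : T) \is a GRing.unit.

Local Notation ST := {mpoly T[r.+1]}.
Local Notation FT := {fraction ST}.
Local Notation Lb := (option 'I_(size Pi)).
Local Notation act := (@lab_act r cor Pi g).
Local Notation root := (@lab_root r Pi g).

Lemma pairingN (a v : 'rV[int]_r) : pairing (- a) v = - pairing a v.
Proof. by rewrite /pairing -sumrN; apply: eq_bigr => i _; rewrite mxE mulNr. Qed.

Lemma srefN al alv n (x : Xh r) : sref al alv n (- x) = - sref al alv n x.
Proof.
rewrite /sref /= pairingN; congr (_, _).
  by rewrite scaleNr opprB opprK addrC.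
by rewrite mulrN opprK opprB addrC.
Qed.

Lemma actN t (x : Xh r) : act t (- x) = - act t x.
Proof. by case: t => [i|] /=; rewrite srefN. Qed.

Lemma evwS (s : nat -> Lb) l (sg : {set 'I_l.+1}) x :
  evw act s sg x = if ord_max \in sg then evw act s (restr sg) (act (s l) x)
                   else evw act s (restr sg) x.
Proof. by []. Qed.

Lemma evwN (s : nat -> Lb) l (sg : {set 'I_l}) x :
  evw act s sg (- x) = - evw act s sg x.
Proof.
elim: l sg x => [|l IH] sg x //=.
by case: ifP => _; rewrite ?actN IH.
Qed.

Lemma embXN (x : Xh r) : embX T (- x) = - embX T x.
Proof.
rewrite /embX opprD -sumrN; congr (_ + _).
  by apply: eq_bigr => i _; rewrite /= mxE mulrNz.
by rewrite /= mulrNz.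
Qed.

Lemma g_in : g \in R.
Proof. by case: Hg => -[]. Qed.

Lemma Pi_in (i : 'I_(size Pi)) : Pi`_i \in R.
Proof. by case: Hbase => _ sub _ _; apply: sub; apply: mem_nth. Qed.

Lemma pair2 a : a \in R -> pairing a (cor a) = 2.
Proof. by case: HRD => _ _ h _ _ /h. Qed.

Lemma refl_in a b : a \in R -> b \in R -> b - pairing b (cor a) *: a \in R.
Proof. by case: HRD => _ _ _ h _ ha hb; apply: h. Qed.

Lemma act_root t : act t (root t) = - root t.
Proof.
case: t => [i|] /=; rewrite /sref /=.
  rewrite pair2 ?Pi_in //; congr (_, _) => /=.
  by rewrite scaler_nat mulr2n opprD addrA subrr sub0r.
rewrite pairingN pair2 ?g_in //.
have -> : - (- g, -1) = (- - g, - -1) :> Xh r by [].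
congr (_, _).
have -> : (-2 : int) = - 2 by [].
by rewrite scaleNr !opprK (_ : (2 : int) = 1 + 1) // scalerDl scale1r addrA addNr add0r.
Qed.

Lemma act_aff t x : is_aff_root R x -> is_aff_root R (act t x).
Proof.
rewrite /is_aff_root; case: t => [i|] /= hx; apply: refl_in => //.
  exact: Pi_in.
exact: g_in.
Qed.

Lemma root_aff t : is_aff_root R (root t).
Proof.
rewrite /is_aff_root; case: t => [i|] /=; first exact: Pi_in.
have := refl_in g_in g_in; rewrite pair2 ?g_in // scaler_nat mulr2n opprD addrA subrr sub0r.
by [].
Qed.

Lemma evw_aff (s : nat -> Lb) l (sg : {set 'I_l}) x :
  is_aff_root R x -> is_aff_root R (evw act s sg x).
Proof.
elim: l sg x => [|l IH] sg x //= hx.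
by case: ifP => _; apply: IH => //; apply: act_aff.
Qed.


Definition mu (s : nat -> Lb) l (t : {set 'I_l}) : FT :=
  tofrac (embX T (evw act s t (root (s l)))).

Lemma mu_neq0 s l (t : {set 'I_l}) : mu s t != 0.
Proof. by rewrite tofrac_eq0; apply/Hne/evw_aff/root_aff. Qed.

Lemma DeltaE l (z : Md r T l) b t : Delta z (ext b t) = z t.
Proof. by rewrite ffunE restr_ext. Qed.

Lemma cmulE s l (z : Md r T l) b t :
  cmul act s (root (s l)) (Delta z) (ext b t) = (if b then - mu s t else mu s t) * z t.
Proof.
rewrite ffunE evwS max_ext restr_ext DeltaE /mu.
by case: b => //; rewrite act_root evwN embXN tofracN.
Qed.

Lemma cinvE s l (z : Md r T l) b t :
  cinv act s (root (s l)) (Delta z) (ext b t) =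
  (if b then - (mu s t)^-1 else (mu s t)^-1) * z t.
Proof.
rewrite ffunE evwS max_ext restr_ext DeltaE /mu.
by case: b => //; rewrite act_root evwN embXN tofracN invrN.
Qed.

Lemma GP s l (y : Md r T l.+1) (x x' : Md r T l) :
  pairF y (Delta x + cmul act s (root (s l)) (Delta x')) =
  \sum_t ((y (ext false t) + y (ext true t)) * x t
          + mu s t * (y (ext false t) - y (ext true t)) * x' t).
Proof.
rewrite /pairF sum_split; apply: eq_bigr => t _.
rewrite !ffunE !restr_ext !evwS !max_ext !restr_ext act_root evwN embXN tofracN.
rewrite -/(mu s t); ring.
Qed.


Lemma two_neq0T : (2%:R : T) != 0.
Proof. by apply: contraTneq H2 => ->; rewrite unitr0. Qed.

Lemma two_ST : (2%:R : ST) = (2%:R : T)%:MP.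
Proof. by rewrite mpolyC_nat. Qed.

Lemma two_FT : (2%:R : FT) = tofrac (2%:R : ST).
Proof. by rewrite rmorph_nat. Qed.

Lemma two_neq0 : (2%:R : FT) != 0.
Proof. by rewrite two_FT tofrac_eq0 two_ST mpolyC_eq0 two_neq0T. Qed.

Definition half : FT := (2%:R)^-1.

Lemma inS_tofrac p : inS (tofrac p : FT).
Proof. by exists p. Qed.

Lemma inS0 : inS (0 : FT).
Proof. by exists 0; rewrite tofrac0. Qed.

Lemma inSD (a b : FT) : inS a -> inS b -> inS (a + b).
Proof. by move=> [p ->] [q ->]; exists (p + q); rewrite tofracD. Qed.

Lemma inSM (a b : FT) : inS a -> inS b -> inS (a * b).
Proof. by move=> [p ->] [q ->]; exists (p * q); rewrite tofracM. Qed.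

Lemma inSN (a : FT) : inS a -> inS (- a).
Proof. by move=> [p ->]; exists (- p); rewrite tofracN. Qed.

Lemma inS_sum (I : Type) (rr : seq I) (P : pred I) (F : I -> FT) :
  (forall i, P i -> inS (F i)) -> inS (\sum_(i <- rr | P i) F i).
Proof. by move=> h; apply: big_ind => //; [exact: inS0 | exact: inSD]. Qed.

Lemma half_inS : inS half.
Proof.
exists ((2%:R : T)^-1)%:MP; apply: (mulfI two_neq0).
rewrite divff ?two_neq0 // two_FT two_ST -tofracM -mpolyCM divrr //.
Qed.

Lemma inS2 : inS (2%:R : FT).
Proof. by rewrite two_FT; apply: inS_tofrac. Qed.

Lemma inQ_S (a : FT) : inS a -> inQ R a.
Proof.
move=> ha; exists 0%N, [::]; split => //.
by rewrite big_nil expr0 mulr1 tofrac1 mul1r.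
Qed.

Lemma inQD (a b : FT) : inQ R a -> inQ R b -> inQ R (a + b).
Proof.
move=> [k1 [L1 [h1 s1]]] [k2 [L2 [h2 s2]]].
exists (k1 + k2)%N, (L1 ++ L2); split; first by rewrite all_cat h1 h2.
have -> : tofrac (2%:R ^+ (k1 + k2) * \prod_(x <- L1 ++ L2) embX T x) * (a + b)
  = tofrac (2%:R ^+ k2 * \prod_(x <- L2) embX T x) *
      (tofrac (2%:R ^+ k1 * \prod_(x <- L1) embX T x) * a)
  + tofrac (2%:R ^+ k1 * \prod_(x <- L1) embX T x) *
      (tofrac (2%:R ^+ k2 * \prod_(x <- L2) embX T x) * b).
  rewrite exprD big_cat /= !tofracM; ring.
by apply: inSD; apply: inSM => //; apply: inS_tofrac.
Qed.

Lemma inQMS (a b : FT) : inS a -> inQ R b -> inQ R (a * b).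
Proof.
move=> ha [k [L [h sb]]]; exists k, L; split => //.
by rewrite mulrCA; apply: inSM.
Qed.

Lemma inQ_inv (x : Xh r) (b : FT) : is_aff_root R x -> inQ R b ->
  inQ R ((tofrac (embX T x))^-1 * b).
Proof.
move=> hx [k [L [h sb]]]; exists k, (x :: L); split; first by rewrite /= hx.
have hne : tofrac (embX T x) != 0 by rewrite tofrac_eq0 Hne.
rewrite big_cons !tofracM.
rewrite auxK; last by rewrite tofrac_eq0 Hne.
by rewrite -tofracM.
Qed.

Lemma inS1 : inS (1 : FT).
Proof. by exists 1; rewrite tofrac1. Qed.

Local Notation XM s l := (@Xmod r T Lb act root s l).
Local Notation YM s l := (@Ymod r T Lb act root s l).

Lemma addME l (f h : Md r T l) sg : (f + h) sg = f sg + h sg.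
Proof. by rewrite ffunE. Qed.

Lemma zeroME l sg : (0 : Md r T l) sg = 0.
Proof. by rewrite ffunE. Qed.

Lemma X0 s l : XM s l 0.
Proof.
elim: l => [|l IH] /=; first by move=> sg; rewrite zeroME; exact: inS0.
by exists 0, 0; split => //; apply/ffunP => sg; rewrite !ffunE mulr0 addr0.
Qed.

Lemma Y0 s l : YM s l 0.
Proof.
elim: l => [|l IH] /=; first by move=> sg; rewrite zeroME; exact: inS0.
by exists 0, 0; split => //; apply/ffunP => sg; rewrite !ffunE mulr0 addr0.
Qed.

Lemma X_inS s l m : XM s l m -> forall sg, inS (m sg).
Proof.
elim: l m => [|l IH] m /=; first done.
move=> [x [x' [hx hx' ->]]] sg.
rewrite -[sg]ext_restr; move: (ord_max \in sg) (restr sg) => b t.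
rewrite addME DeltaE cmulE; apply: inSD; first exact: IH.
apply: inSM; last exact: IH.
by case: b; [apply: inSN|]; apply: inS_tofrac.
Qed.

Lemma Y_inQ s l y : YM s l y -> forall sg, inQ R (y sg).
Proof.
elim: l y => [|l IH] y /=; first by move=> h sg; apply: inQ_S.
move=> [u [v [hu hv ->]]] sg.
rewrite -[sg]ext_restr; move: (ord_max \in sg) (restr sg) => b t.
rewrite addME DeltaE cinvE; apply: inQD; first exact: IH.
have hv' := IH _ hv t.
case: b; last by apply: inQ_inv; [apply/evw_aff/root_aff | ].
rewrite mulNr -mulrN -mulN1r; apply: inQ_inv; first by apply/evw_aff/root_aff.
by apply: inQMS => //; apply/inSN/inS1.
Qed.

Lemma set0_uniq (sg : {set 'I_0}) : sg = set0.
Proof. by apply/setP => -[]. Qed.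

Lemma sum0 (F : {set 'I_0} -> FT) : \sum_sg F sg = F set0.
Proof. by rewrite (big_pred1 set0) // => sg; rewrite /= (set0_uniq sg) eqxx. Qed.

Lemma pairF0r l (y : Md r T l) : pairF y 0 = 0.
Proof. by rewrite /pairF big1 // => sg _; rewrite zeroME mulr0. Qed.

Lemma pairF0l l (m : Md r T l) : pairF 0 m = 0.
Proof. by rewrite /pairF big1 // => sg _; rewrite zeroME mul0r. Qed.

Lemma pairFD l (y y' m : Md r T l) : pairF (y + y') m = pairF y m + pairF y' m.
Proof. by rewrite /pairF -big_split; apply: eq_bigr => sg _; rewrite addME mulrDl. Qed.

Lemma pairFB l (y y' m : Md r T l) : pairF (y - y') m = pairF y m - pairF y' m.
Proof.
rewrite /pairF -sumrB; apply: eq_bigr => sg _.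
by rewrite !ffunE mulrBl.
Qed.

Lemma pairF_addr l (y m m' : Md r T l) : pairF y (m + m') = pairF y m + pairF y m'.
Proof. by rewrite /pairF -big_split; apply: eq_bigr => sg _; rewrite addME mulrDr. Qed.

Lemma pairF_scale l (y m : Md r T l) p : pairF y (scaleM p m) = tofrac p * pairF y m.
Proof.
rewrite /pairF mulr_sumr; apply: eq_bigr => sg _.
by rewrite ffunE mulrCA.
Qed.

Lemma one_X0 s : XM s 0 [ffun _ => 1].
Proof. by move=> sg; rewrite ffunE; exact: inS1. Qed.

Lemma XmodS s l (x x' : Md r T l) : XM s l x -> XM s l x' ->
  XM s l.+1 (Delta x + cmul act s (root (s l)) (Delta x')).
Proof. by move=> hx hx'; exists x, x'. Qed.

Lemma YmodS s l (u v : Md r T l) : YM s l u -> YM s l v ->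
  YM s l.+1 (Delta u + cinv act s (root (s l)) (Delta v)).
Proof. by move=> hu hv; exists u, v. Qed.

Definition uy l (y : Md r T l.+1) : Md r T l :=
  [ffun t => half * (y (ext false t) + y (ext true t))].
Definition vy s l (y : Md r T l.+1) : Md r T l :=
  [ffun t => half * (mu s t * (y (ext false t) - y (ext true t)))].

Lemma GPuv s l (y : Md r T l.+1) (x x' : Md r T l) :
  pairF y (Delta x + cmul act s (root (s l)) (Delta x')) =
  2%:R * (pairF (uy y) x + pairF (vy s y) x').
Proof.
rewrite GP /pairF mulrDr !mulr_sumr -big_split; apply: eq_bigr => t _.
by rewrite !ffunE /half aux_uv // two_neq0.
Qed.

Lemma GPY s l (u v x x' : Md r T l) :
  pairF (Delta u + cinv act s (root (s l)) (Delta v))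
        (Delta x + cmul act s (root (s l)) (Delta x')) =
  2%:R * (pairF u x + pairF v x').
Proof.
rewrite GP /pairF mulrDr !mulr_sumr -big_split; apply: eq_bigr => t _.
by rewrite !addME !DeltaE !cinvE /= aux_GPY // mu_neq0.
Qed.

Lemma twoK (a : FT) : a = 2%:R * (half * a).
Proof. by rewrite /half mulrA divff ?two_neq0 // mul1r. Qed.

Lemma halfK (a : FT) : half * (2%:R * a) = a.
Proof. by rewrite /half mulKf // two_neq0. Qed.

Lemma P1 s l (y : Md r T l) :
  YM s l y <-> (forall sg, inQ R (y sg)) /\ (forall m, XM s l m -> inS (pairF y m)).
Proof.
elim: l y => [|l IH] y.
  split.
    move=> hy; split => [sg|m hm]; first by apply: inQ_S.
    by apply: inS_sum => sg _; apply: inSM; [exact: hy | exact: hm].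
  move=> [_ hd] sg /=.
  have := hd _ (one_X0 s); rewrite /pairF sum0 ffunE mulr1.
  by rewrite (set0_uniq sg).
split.
  move=> hy; split; first exact: Y_inQ hy.
  case: hy => [u [v [hu hv ->]]] m [x [x' [hx hx' ->]]].
  rewrite GPY; apply: inSM; first exact: inS2.
  by apply: inSD; [apply: (proj2 (proj1 (IH u) hu)) | apply: (proj2 (proj1 (IH v) hv))].
move=> [hq hd].
exists (uy y), (vy s y); split.
- apply/IH; split.
    move=> t; rewrite ffunE; apply: inQMS; first exact: half_inS.
    by apply: inQD.
  move=> x hx; have := hd _ (XmodS hx (X0 s l)).
  by rewrite GPuv pairF0r addr0 => h; rewrite -[pairF _ x]halfK; apply: inSM => //; exact: half_inS.
- apply/IH; split.
    move=> t; rewrite ffunE; apply: inQMS; first exact: half_inS.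
    apply: inQMS; first exact: inS_tofrac.
    by apply: inQD => //; rewrite -mulN1r; apply: inQMS => //; apply/inSN/inS1.
  move=> x hx; have := hd _ (XmodS (X0 s l) hx).
  by rewrite GPuv pairF0r add0r => h; rewrite -[pairF _ x]halfK; apply: inSM => //; exact: half_inS.
- apply/ffunP => sg; rewrite -[sg]ext_restr; move: (ord_max \in sg) (restr sg) => b t.
  rewrite addME DeltaE cinvE !ffunE /half.
  by case: b; [rewrite aux_rec1 | rewrite aux_rec0]; rewrite ?mu_neq0 ?two_neq0.
Qed.

Lemma Zl s l (y : Md r T l) : (forall m, XM s l m -> pairF y m = 0) -> y = 0.
Proof.
elim: l y => [|l IH] y hy.
  apply/ffunP => sg; rewrite zeroME (set0_uniq sg).
  by have := hy _ (one_X0 s); rewrite /pairF sum0 ffunE mulr1.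
have hu : uy y = 0.
  apply: IH => x hx; have := hy _ (XmodS hx (X0 s l)).
  by rewrite GPuv pairF0r addr0 => /eqP; rewrite mulf_eq0 (negbTE two_neq0) /= => /eqP.
have hv : vy s y = 0.
  apply: IH => x hx; have := hy _ (XmodS (X0 s l) hx).
  by rewrite GPuv pairF0r add0r => /eqP; rewrite mulf_eq0 (negbTE two_neq0) /= => /eqP.
apply/ffunP => sg; rewrite -[sg]ext_restr; move: (ord_max \in sg) (restr sg) => b t.
have := congr1 (fun f : Md r T l => f t) hu; have := congr1 (fun f : Md r T l => f t) hv.
rewrite /= !ffunE /half => e2 e1.
have [h0 h1] := aux_zero (mu_neq0 s t) two_neq0 e1 e2.
by case: b.
Qed.

Lemma Yadd s l (y y' : Md r T l) : YM s l y -> YM s l y' -> YM s l (y + y').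
Proof.
elim: l y y' => [|l IH] y y' /=.
  by move=> h h' sg; rewrite addME; apply: inSD.
move=> [u [v [hu hv ->]]] [u' [v' [hu' hv' ->]]].
exists (u + u'), (v + v'); split; [exact: IH | exact: IH |].
by apply/ffunP => sg; rewrite !ffunE; ring.
Qed.

Lemma Ysum s l (I : Type) (rr : seq I) (F : I -> Md r T l) :
  (forall i, YM s l (F i)) -> YM s l (\sum_(i <- rr) F i).
Proof.
move=> h; apply: big_ind => //; first exact: Y0.
by move=> a b; apply: Yadd.
Qed.

Lemma Rep s l (f : Md r T l -> FT) :
  (forall m m', XM s l m -> XM s l m' -> f (m + m') = f m + f m') ->
  (forall p m, XM s l m -> f (scaleM p m) = tofrac p * f m) ->
  (forall m, XM s l m -> inS (f m)) ->
  exists y, YM s l y /\ forall m, XM s l m -> f m = pairF y m.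
Proof.
elim: l f => [|l IH] f fadd fscale fS.
  exists [ffun _ => f [ffun _ => 1]]; split.
    by move=> sg; rewrite ffunE; apply: fS; apply: one_X0.
  move=> m hm; have [p hp] := X_inS hm set0.
  have -> : m = scaleM p [ffun _ => 1].
    by apply/ffunP => sg; rewrite !ffunE mulr1 (set0_uniq sg).
  rewrite fscale; last exact: one_X0.
  by rewrite /pairF sum0 !ffunE mulr1 mulrC.
pose lam := root (s l).
pose g1 (x : Md r T l) := half * f (Delta x + cmul act s lam (Delta 0)).
pose h1 (x : Md r T l) := half * f (Delta 0 + cmul act s lam (Delta x)).
have [u [hu eu]] : exists u, YM s l u /\ forall x, XM s l x -> g1 x = pairF u x.
  apply: IH.
  - move=> x x' hx hx'; rewrite /g1 -mulrDr -fadd; try exact: XmodS hx (X0 s l).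
      by congr (_ * f _); apply/ffunP => sg; rewrite !ffunE; ring.
    exact: XmodS hx' (X0 s l).
  - move=> p x hx; rewrite /g1 mulrCA -fscale; last exact: XmodS hx (X0 s l).
    by congr (_ * f _); apply/ffunP => sg; rewrite !ffunE; ring.
  - by move=> x hx; apply: inSM; [exact: half_inS | apply: fS; exact: XmodS hx (X0 s l)].
have [v [hv ev]] : exists v, YM s l v /\ forall x, XM s l x -> h1 x = pairF v x.
  apply: IH.
  - move=> x x' hx hx'; rewrite /h1 -mulrDr -fadd; try exact: XmodS (X0 s l) hx.
      by congr (_ * f _); apply/ffunP => sg; rewrite !ffunE; ring.
    exact: XmodS (X0 s l) hx'.
  - move=> p x hx; rewrite /h1 mulrCA -fscale; last exact: XmodS (X0 s l) hx.
    by congr (_ * f _); apply/ffunP => sg; rewrite !ffunE; ring.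
  - by move=> x hx; apply: inSM; [exact: half_inS | apply: fS; exact: XmodS (X0 s l) hx].
exists (Delta u + cinv act s lam (Delta v)); split; first exact: YmodS.
move=> m [x [x' [hx hx' ->]]].
rewrite GPY -eu // -ev // /g1 /h1 mulrDr -!twoK -fadd; try exact: XmodS hx (X0 s l).
  by congr f; apply/ffunP => sg; rewrite !ffunE; ring.
exact: XmodS (X0 s l) hx'.
Qed.

Lemma homS0 k : homS k (0 : ST).
Proof. by case: k => [k'|k'] //=; case: ifP => _ //; exact: rpred0. Qed.

Lemma homSD k (p q : ST) : homS k p -> homS k q -> homS k (p + q).
Proof.
case: k => [k'|k'] /=.
  case: ifP => _; last exact: rpredD.
  by move=> /eqP -> /eqP ->; rewrite addr0.
by move=> /eqP -> /eqP ->; rewrite addr0.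
Qed.

Lemma homSZ k (c : T) (p : ST) : homS k p -> homS k (c%:MP * p).
Proof.
rewrite mul_mpolyC; case: k => [k'|k'] /=.
  case: ifP => _; last exact: rpredZ.
  by move=> /eqP ->; rewrite scaler0.
by move=> /eqP ->; rewrite scaler0.
Qed.

Lemma homSM (d : nat) k (e p : ST) : e \is d.-homog -> homS k p ->
  homS (k + Posz d.*2) (e * p).
Proof.
move=> he; case: k => [k'|k'] /=; last by move=> /eqP ->; rewrite mulr0 homS0.
case: ifP => ho.
  by move=> /eqP ->; rewrite mulr0; case: ifP => // _; apply: rpred0.
move=> hp; rewrite oddD odd_double ho /= halfD odd_double andbF add0n.
by rewrite half_double addnC; apply: dhomogM.
Qed.

Lemma piM1 (e q : ST) j : e \is 1.-homog ->
  pihomog mdeg j.+1 (e * q) = e * pihomog mdeg j q.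
Proof.
move=> he; set k := maxn (msize q) j.+1.
have hjk : (j < k)%N by rewrite leq_maxr.
rewrite {1}(pihomog_partitionE (k := k) (mf := mdeg) (p := q)) ?leq_maxl //.
rewrite mulr_sumr raddf_sum /=.
rewrite (bigD1 (Ordinal hjk)) //= big1 ?addr0.
  by rewrite pihomog_dE //; have := dhomogM he (pihomogP mdeg j q); rewrite add1n.
move=> i hi; apply: (@pihomog_ne0 _ _ _ (1 + i)%N).
  by rewrite add1n eqSS; apply: contra hi => /eqP hij; apply/eqP/val_inj.
by apply: dhomogM => //; apply: pihomogP.
Qed.

Lemma piM0 (e q : ST) : e \is 1.-homog -> pihomog mdeg 0 (e * q) = 0.
Proof.
move=> he.
rewrite (pihomog_partitionE (k := msize q) (mf := mdeg) (p := q)) //.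
rewrite mulr_sumr raddf_sum /= big1 // => i _.
by apply: (@pihomog_ne0 _ _ _ (1 + i)%N) => //; apply: dhomogM => //; apply: pihomogP.
Qed.

Lemma divhom (e p : ST) k : e \is 1.-homog -> e != 0 -> homS k (e * p) -> homS (k - 2) p.
Proof.
move=> he hne.
have z : forall k, e * p = 0 -> homS k p.
  by move=> k0 /eqP; rewrite mulf_eq0 (negbTE hne) /= => /eqP ->; apply: homS0.
case: k => [k'|k']; last by move=> /eqP /z.
rewrite {1}/homS; case: ifP => ho; first by move=> /eqP /z.
move=> hp.
have hk' : k' = (k'./2).*2 by rewrite -{1}(odd_double_half k') ho.
move: hp; case e2: (k'./2) => [|j] hp.
  by apply: z; rewrite -(pihomog_dE hp) piM0.
have pe : p = pihomog mdeg j p.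
  apply: (mulfI hne); rewrite -piM1 //; exact/esym/pihomog_dE.
rewrite hk' e2 doubleS -addn2 PoszD addrK /= odd_double half_double pe.
exact: pihomogP.
Qed.

Lemma embX_homog (x : Xh r) : embX T x \is 1.-homog.
Proof.
rewrite /embX; apply: rpredD; first apply: rpred_sum => i _.
  by rewrite -scaler_int; apply: rpredZ; rewrite dhomogX; apply/eqP/mdeg1.
by apply: rpredMz; rewrite dhomogX; apply/eqP/mdeg1.
Qed.

Lemma homF0 k : homF k (0 : FT).
Proof. by exists 0; rewrite tofrac0 homS0. Qed.

Lemma homFD k (a b : FT) : homF k a -> homF k b -> homF k (a + b).
Proof. by move=> [p [-> hp]] [q [-> hq]]; exists (p + q); rewrite tofracD homSD. Qed.

Lemma homFC k (c : T) (a : FT) : homF k a -> homF k (tofrac c%:MP * a).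
Proof. by move=> [p [-> hp]]; exists (c%:MP * p); rewrite tofracM homSZ. Qed.

Lemma half_C : half = tofrac ((2%:R : T)^-1)%:MP.
Proof.
apply: (mulfI two_neq0).
by rewrite divff ?two_neq0 // two_FT two_ST -tofracM -mpolyCM divrr // tofrac1.
Qed.

Lemma homFhalf k (a : FT) : homF k a -> homF k (half * a).
Proof. by rewrite half_C; apply: homFC. Qed.

Lemma homFN k (a : FT) : homF k a -> homF k (- a).
Proof.
move=> h; rewrite -mulN1r (_ : -1 = tofrac (-1 : T)%:MP); first exact: homFC.
by rewrite mpolyCN tofracN mpolyC1 tofrac1.
Qed.

Lemma homF2 k (a : FT) : homF k a -> homF k (2%:R * a).
Proof. by move=> h; rewrite mulr_natl mulr2n; apply: homFD. Qed.

Definition HG s l (n : int) (z : Md r T l) : Prop :=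
  forall (k : int) m, XM s l m -> (forall sg, homF k (m sg)) -> homF (k + n) (pairF z m).

Lemma DeltaZ s l (z : Md r T l) :
  Delta z + cinv act s (root (s l)) (Delta 0) = Delta z.
Proof. by apply/ffunP => sg; rewrite !ffunE mulr0 addr0. Qed.

Lemma cinvZ s l (z : Md r T l) :
  Delta 0 + cinv act s (root (s l)) (Delta z) = cinv act s (root (s l)) (Delta z).
Proof. by apply/ffunP => sg; rewrite !ffunE add0r. Qed.

Lemma xcomp s l (x x' : Md r T l) t :
  let M := Delta x + cmul act s (root (s l)) (Delta x') in
  x t = half * (M (ext false t) + M (ext true t)).
Proof. by rewrite /= !addME !DeltaE !cmulE /= /half -aux_x // two_neq0. Qed.

Lemma x'comp s l (x x' : Md r T l) t :
  let M := Delta x + cmul act s (root (s l)) (Delta x') in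
  mu s t * x' t = half * (M (ext false t) - M (ext true t)).
Proof. by rewrite /= !addME !DeltaE !cmulE /= /half -aux_x' // two_neq0. Qed.

Lemma HGD s l n (z : Md r T l) : HG s n z -> HG s n (Delta z).
Proof.
move=> hz k m [x [x' [hx hx' ->]]] hm.
rewrite -(DeltaZ s z) GPY pairF0l addr0; apply: homF2; apply: hz => // t.
by rewrite (xcomp s x x' t); apply: homFhalf; apply: homFD; apply: hm.
Qed.

Lemma HGC s l n (z : Md r T l) : HG s n z ->
  HG s (n - 2) (cinv act s (root (s l)) (Delta z)).
Proof.
move=> hz k m [x [x' [hx hx' ->]]] hm.
rewrite -(cinvZ s z) GPY pairF0l add0r; apply: homF2.
have -> : k + (n - 2) = (k - 2) + n by rewrite addrAC addrA.
apply: hz => // t.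
have [p hp] := X_inS hx' t.
have h : homF k (mu s t * x' t).
  by rewrite (x'comp s x x' t); apply: homFhalf; apply: homFD; [apply: hm | apply/homFN/hm].
move: h; rewrite hp /mu -tofracM => -[q [/eqP eq hq]].
move: eq; rewrite tofrac_eq => /eqP eq.
exists p; split => //.
apply: (@divhom (embX T (evw act s t (root (s l)))) p k (embX_homog _)).
  by apply/Hne/evw_aff/root_aff.
by rewrite eq.
Qed.

Lemma Dec s l (y : Md r T l) : YM s l y ->
  exists zs : seq (int * Md r T l),
    (forall p, p \in zs -> YM s l p.2 /\ HG s p.1 p.2) /\ y = \sum_(p <- zs) p.2.
Proof.
elim: l y => [|l IH] y.
  move=> hy; have [p hp] := hy set0.
  exists [seq (Posz d.*2, [ffun _ => tofrac (pihomog mdeg d p)] : Md r T 0)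
           | d <- index_iota 0 (msize p)]; split.
    move=> q /mapP [d _ ->] /=; split.
      by move=> sg; rewrite ffunE; apply: inS_tofrac.
    move=> k m hm hk; rewrite /pairF sum0 ffunE.
    have [q' [-> hq']] := hk set0.
    by exists (pihomog mdeg d p * q'); rewrite tofracM; split => //; apply: homSM => //; apply: pihomogP.
  apply/ffunP => sg; rewrite big_map sum_ffunE (set0_uniq sg) hp.
  rewrite {1}(pihomog_partitionE (k := msize p) (mf := mdeg) (p := p)) //.
  rewrite rmorph_sum /= big_mkord; apply: eq_bigr => d _; by rewrite ffunE.
move=> [u [v [hu hv ->]]].
have [zs1 [h1 e1]] := IH _ hu; have [zs2 [h2 e2]] := IH _ hv.
exists ([seq (p.1, Delta p.2) | p <- zs1] ++
        [seq (p.1 - 2, cinv act s (root (s l)) (Delta p.2)) | p <- zs2]); split.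
  move=> q; rewrite mem_cat => /orP [] /mapP [p hp ->] /=.
    have [hy hg] := h1 _ hp; split; last exact: HGD.
    by rewrite -(DeltaZ s p.2); apply: YmodS => //; apply: Y0.
  have [hy hg] := h2 _ hp; split; last exact: HGC.
  by rewrite -(cinvZ s p.2); apply: YmodS => //; apply: Y0.
have DD : {morph (@Delta r T l) : a b / a + b >-> a + b}.
  by move=> a b; apply/ffunP => sg; rewrite !ffunE.
have D0 : Delta (0 : Md r T l) = 0 by apply/ffunP => sg; rewrite !ffunE.
have CD : {morph (cinv act s (root (s l)) : Md r T l.+1 -> Md r T l.+1) : a b / a + b >-> a + b}.
  by move=> a b; apply/ffunP => sg; rewrite !ffunE mulrDr.
have C0 : cinv act s (root (s l)) (0 : Md r T l.+1) = 0 by apply/ffunP => sg; rewrite !ffunE mulr0.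
rewrite big_cat !big_map /= e1 e2 (big_morph _ DD D0) (big_morph _ DD D0).
by rewrite (big_morph _ CD C0).
Qed.

End Main.

Theorem lemma6p8 (r : nat) (R : seq 'rV[int]_r) (cor : 'rV[int]_r -> 'rV[int]_r)
    (Pi : seq 'rV[int]_r) (g : 'rV[int]_r) (T : idomainType) :
  is_root_datum R cor -> is_reduced R -> is_irreducible R cor ->
  is_base R Pi -> is_highest_root R Pi g ->
  (forall x : Xh r, is_aff_root R x -> embX T x != 0) ->
  (2%:R : T) \is a GRing.unit ->
  forall s : seq (option 'I_(size Pi)),
    (forall y : Md r T (size s),
        YT T cor Pi g s y <->
        ((forall sg, inQ R (y sg)) /\
         (forall m, XT T cor Pi g s m -> inS (pairF y m))))
    /\
    (forall phi : Md r T (size s) -> {fraction {mpoly T[r.+1]}},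
        in_graded_dual (XT T cor Pi g s) phi <->
        exists y, YT T cor Pi g s y /\ forall m, XT T cor Pi g s m -> phi m = pairF y m)
    /\
    (forall y y' : Md r T (size s), YT T cor Pi g s y -> YT T cor Pi g s y' ->
        (forall m, XT T cor Pi g s m -> pairF y m = pairF y' m) -> y = y').
Proof.
move=> HRD _ _ Hbase Hg Hne H2 s0.
rewrite /XT /YT.
have P1' := P1 HRD Hbase Hg Hne H2 (nth None s0) (l := size s0).
split; first exact: P1'.
split.
  move=> phi; split.
    move=> [N [deg [phis [hphis hsum]]]].
    have key : forall js : seq 'I_N, exists y : Md r T (size s0),
        Ymod (lab_act cor g) (lab_root g) (nth None s0) y /\
        forall m, Xmod (lab_act cor g) (lab_root g) (nth None s0) m ->
          \sum_(j <- js) phis j m = pairF y m.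
      elim => [|j js [y [hy ey]]].
        exists 0; split; first exact: Y0.
        by move=> m _; rewrite big_nil pairF0l.
      have [hadd hsc hS _] := hphis j.
      have [yj [hyj eyj]] := Rep HRD Hbase Hg Hne H2 hadd hsc hS.
      exists (yj + y); split; first exact: Yadd.
      by move=> m hm; rewrite big_cons pairFD eyj // ey.
    have [y [hy ey]] := key (index_enum 'I_N).
    by exists y; split => // m hm; rewrite hsum // ey.
  move=> [y [hy ey]].
  have [zs [hz ez]] := Dec HRD Hbase Hg Hne H2 hy.
  exists (size zs), (fun j => (nth (0, 0) zs j).1),
    (fun j m => pairF (nth (0, 0) zs j).2 m); split.
    move=> j; have [hyj hgj] := hz _ (mem_nth (0, 0) (ltn_ord j)); split.
    - by move=> m m' _ _; apply: pairF_addr.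
    - by move=> p m _; apply: pairF_scale.
    - by move=> m hm; apply: (proj2 (proj1 (P1' _) hyj) m hm).
    - by move=> k m hm hk; apply: hgj.
  move=> m hm; rewrite ey // ez.
  rewrite (big_morph (fun y => pairF y m) (fun a b => pairFD a b m) (pairF0l m)).
  by rewrite (big_nth (0, 0)) big_mkord.
move=> y y' hy hy' he.
apply/eqP; rewrite -subr_eq0; apply/eqP.
apply: (@Zl _ _ _ _ _ _ HRD Hbase Hg Hne H2 (nth None s0)) => m hm.
by rewrite pairFB (he m hm) subrr.
Qed.
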